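(* Let $W=\mathfrak{S}_n$, $\ast=\mathrm{id}$, $w\in I_\ast$, and let $(s_{i_1},\dots,s_{i_k},w)$ be a reduced sequence. (1) If $k\ge2$ and $|i_{k-1}-i_k|>1$, then $(s_{i_1},\dots,s_{i_{k-2}},s_{i_k},s_{i_{k-1}},w)$ is a reduced sequence and $s_{i_1}\ltimes\cdots\ltimes s_{i_{k-1}}\ltimes s_{i_k}\ltimes w=s_{i_1}\ltimes\cdots\ltimes s_{i_{k-2}}\ltimes s_{i_k}\ltimes s_{i_{k-1}}\ltimes w$. (2) If $k\ge3$ and $i_{k-2}=i_k=i_{k-1}\pm1$, then $(s_{i_1},\dots,s_{i_{k-3}},s_{i_{k-1}},s_{i_k},s_{i_{k-1}},w)$ is a reduced sequence and $s_{i_1}\ltimes\cdots\ltimes s_{i_{k-3}}\ltimes s_{i_{k-2}}\ltimes s_{i_{k-1}}\ltimes s_{i_k}\ltimes w=s_{i_1}\ltimes\cdots\ltimes s_{i_{k-3}}\ltimes s_{i_{k-1}}\ltimes s_{i_k}\ltimes s_{i_{k-1}}\ltimes w$. (3) If $w=s_{i_k\pm1}$, then $(s_{i_1},\dots,s_{i_{k-1}},s_{i_k\pm1},s_{i_k})$ is a reduced sequence and $s_{i_1}\ltimes\cdots\ltimes s_{i_{k-1}}\ltimes s_{i_k}\ltimes s_{i_k\pm1}=s_{i_1}\ltimes\cdots\ltimes s_{i_{k-1}}\ltimes s_{i_k\pm1}\ltimes s_{i_k}$.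
   Context: $\mathfrak{S}_n$ with $s_i=(i,i+1)$, $S=\{s_1,\dots,s_{n-1}\}$; $I_\ast=\{w\in\mathfrak{S}_n:w^2=1\}$. For $s\in S$, $w\in I_\ast$: $s\ltimes w=sw$ if $sw=ws$, $s\ltimes w=sws$ otherwise (so $s\ltimes1=s$); iterated from the right: $s_{i_1}\ltimes\cdots\ltimes s_{i_k}\ltimes w=s_{i_1}\ltimes(\cdots(s_{i_k}\ltimes w)\cdots)$, and an expression ending in $s_{i_k}$ means ending in $s_{i_k}\ltimes1$. $\rho(w)$ is the minimal $k$ such that $w=s_{i_1}\ltimes\cdots\ltimes s_{i_k}\ltimes1$ for some $s_{i_j}\in S$. A sequence $(s_{i_1},\dots,s_{i_k},w)$ with $w\in I_\ast$ is reduced if $\rho(s_{i_1}\ltimes\cdots\ltimes s_{i_k}\ltimes w)=\rho(w)+k$. *)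

(* Defs.v *)
From Stdlib Require Import ClassicalEpsilon.
From mathcomp Require Import all_boot all_fingroup.
Set Implicit Arguments. Unset Strict Implicit. Unset Printing Implicit Defensive.
Local Open Scope group_scope.

(* Generators of S_n, 1-based as in the paper: s_i = (i, i+1), valid for
   1 <= i <= n-1.  With 0-based points 'I_n, s_i swaps points i-1 and i. *)
Definition validS (n i : nat) : bool := (0 < i < n)%N.

Definition sgen (n i : nat) : {perm 'I_n} :=
  match n return {perm 'I_n} with
  | 0 => 1
  | n'.+1 => tperm (@inord n' i.-1) (@inord n' i)
  end.

(* I_* = involutions (ast = id) *)
Definition is_involution n (w : {perm 'I_n}) : bool := w * w == 1.

Definition ltimes n (s w : {perm 'I_n}) : {perm 'I_n} :=
  if s * w == w * s then s * w else s * w * s.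

(* s_{i_1} ⋉ ... ⋉ s_{i_k} ⋉ w, iterated from the right; l = [:: i_1; ...; i_k] *)
Definition tact n (l : seq nat) (w : {perm 'I_n}) : {perm 'I_n} :=
  foldr (fun i u => ltimes (sgen n i) u) w l.

Definition reachable_in n (k : nat) (w : {perm 'I_n}) : Prop :=
  exists l : seq nat, size l = k /\ all (validS n) l /\ w = tact l 1.

Definition reachb n (w : {perm 'I_n}) (k : nat) : bool :=
  if excluded_middle_informative (reachable_in k w) then true else false.

(* rho(w): the minimal such k (0 by convention if none exists; this never
   happens for involutions). *)
Definition rho n (w : {perm 'I_n}) : nat :=
  match excluded_middle_informative (exists k, reachb w k) with
  | left h => ex_minn h
  | right _ => 0
  end.

Definition reduced n (l : seq nat) (w : {perm 'I_n}) : Prop :=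
  [/\ is_involution w, all (validS n) l & rho (tact l w) = rho w + size l].

(* Main.v *)
Require Import Defs.
From Stdlib Require Import ClassicalEpsilon.
From mathcomp Require Import all_boot all_fingroup zify.
Set Implicit Arguments. Unset Strict Implicit. Unset Printing Implicit Defensive.
Local Open Scope group_scope.
Lemma tpE (T : finType) (x y z : T) :
  tperm x y z = if z == x then y else if z == y then x else z.
Proof. by case: tpermP => [->|->|/eqP/negbTE-> /eqP/negbTE->]; rewrite ?eqxx //; case: eqP => // ->. Qed.

Lemma commE n (x y : 'I_n) (u : {perm 'I_n}) : x != y ->
  (tperm x y * u == u * tperm x y) =
   ((u x == x) && (u y == y)) || ((u x == y) && (u y == x)).
Proof.
move=> xy; apply/eqP/idP.
- move=> /permP E; have Ex := E x; have Ey := E y.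
  rewrite !permM in Ex Ey. rewrite tpermL in Ex. rewrite tpermR in Ey.
  have [ux|ux] := eqVneq (u x) x.
    by rewrite ux tpermL in Ex; rewrite Ex !eqxx.
  have [uy|uy] := eqVneq (u x) y.
    by rewrite uy tpermR in Ex; rewrite Ex !eqxx ?andbT ?orbT.
  rewrite tpermD 1?eq_sym // in Ex.
  by move/perm_inj: Ex => Ex; rewrite Ex eqxx in xy.
- have nq : forall (z a v : 'I_n), u a = v -> z != a -> v != u z.
    by move=> z a v <- za; rewrite (inj_eq perm_inj) eq_sym.
  case/orP=> /andP[/eqP ux /eqP uy]; apply/permP=> z; rewrite !permM.
  + have [->|zx] := eqVneq z x; first by rewrite tpermL ux uy tpermL.
    have [->|zy] := eqVneq z y; first by rewrite tpermR ux uy tpermR.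
    by rewrite (tpermD (nq _ _ _ ux zx) (nq _ _ _ uy zy)) tpermD // eq_sym.
  + have [->|zx] := eqVneq z x; first by rewrite tpermL ux uy tpermR.
    have [->|zy] := eqVneq z y; first by rewrite tpermR ux uy tpermL.
    by rewrite (tpermD (nq _ _ _ uy zy) (nq _ _ _ ux zx)) tpermD // eq_sym.
Qed.

Lemma permif n (b : bool) (p q : {perm 'I_n}) x :
  (if b then p else q) x = if b then p x else q x.
Proof. by case: b. Qed.

Lemma ltimesE n (s u : {perm 'I_n}) :
  ltimes s u = if s * u == u * s then s * u else s * u * s.
Proof. by []. Qed.

Ltac contra := match goal with H : (?x == ?x) = false |- _ => by rewrite eqxx in H end.

Ltac norm_hyps Hw :=
  repeat match goal with
  | H : context [fun_of_perm ?p (fun_of_perm ?p ?y)] |- _ => rewrite Hw in H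
  | H : ?x = ?x |- _ => clear H
  | H : ?y = fun_of_perm ?p ?y |- _ => symmetry in H
  | H : fun_of_perm ?p ?y = ?y, H2 : context [fun_of_perm ?p ?y] |- _ =>
     lazymatch type of H2 with fun_of_perm p y = y => fail | _ => rewrite H in H2 end
  end.

Ltac simp Hw :=
  rewrite ?permif ?permM ?tpermL ?tpermR ?Hw ?eqxx ?(inj_eq (@perm_inj _ _)) /=;
  repeat match goal with H : (_ == _) = false |- _ => rewrite H end;
  repeat match goal with H : fun_of_perm ?p ?y = ?y |- _ => rewrite H end;
  rewrite ?Hw ?eqxx ?(inj_eq (@perm_inj _ _)) /=.

Ltac handle_eq Hw E :=
  match type of E with
  | ?x = ?x => clear E
  | fun_of_perm ?p ?y = fun_of_perm ?p ?z => apply perm_inj in E; handle_eq Hw E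
  | fun_of_perm ?p ?y = ?z => is_var y;
       let E' := fresh in have E' : y = fun_of_perm p z by rewrite -E Hw;
       clear E; subst y
  | ?z = fun_of_perm ?p ?y => is_var y;
       let E' := fresh in have E' : y = fun_of_perm p z by rewrite E Hw;
       clear E; subst y
  | ?x = _ => is_var x; subst x
  | _ = ?x => is_var x; subst x
  | _ => idtac
  end.

Ltac step Hw :=
  first [
  match goal with |- context [fun_of_perm (tperm ?u ?v) ?z] =>
      lazymatch z with context [tperm _ _] => fail | _ => rewrite (tpE u v z) end end
  | match goal with |- context [if ?b then _ else _] =>
    lazymatch b with context [if _ then _ else _] => fail | _ => idtac end;
    match b with context [?t1 == ?t2] =>
    let E := fresh "E" in
    case: (t1 =P t2) => E;
    [ handle_eq Hw E | move/eqP/negbTE: E => E; let E' := fresh "E" in have E' := E; rewrite eq_sym in E' ]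
  end end ].

Ltac bf Hw := repeat (norm_hyps Hw; try contra; simp Hw; step Hw); norm_hyps Hw; try contra; simp Hw; try done.

Lemma ltE' n (x y : 'I_n) (u : {perm 'I_n}) : x != y ->
  ltimes (tperm x y) u = if ((u x == x) && (u y == y)) || ((u x == y) && (u y == x))
                         then tperm x y * u else tperm x y * u * tperm x y.
Proof. by move=> xy; rewrite ltimesE commE. Qed.

Ltac lt_inner :=
  match goal with |- context [ltimes (tperm ?x ?y) ?u] =>
    lazymatch u with context [ltimes _ _] => fail | _ =>
    match goal with H : (x == y) = false |- _ => rewrite (ltE' u (negbT H)) end end end.

Ltac bfl Hw := repeat (norm_hyps Hw; try contra; simp Hw; first [step Hw | lt_inner]); norm_hyps Hw; try contra; simp Hw; try done.

Lemma K n (a b c : 'I_n) (w : {perm 'I_n}) :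
  a != b -> b != c -> a != c -> (forall y, w (w y) = y) ->
  let s := tperm a b in let t := tperm b c in
  ltimes s (ltimes t (ltimes s w)) = ltimes t (ltimes s (ltimes t w)) \/
  ltimes s (ltimes t (ltimes s w)) = ltimes t w.
Proof.
move=> ab bc ac Hw s t; rewrite /s /t.
move: ab bc ac => /negbTE ab /negbTE bc /negbTE ac.
have ba := ab; rewrite eq_sym in ba. have cb := bc; rewrite eq_sym in cb. have ca := ac; rewrite eq_sym in ca.
bfl Hw.
all: first [ (left; apply/permP => x; bf Hw; done) | (right; apply/permP => x; bf Hw; done) | idtac ].
Qed.

Lemma braid3 n (A B C : 'I_n) : A != B -> B != C -> A != C ->
  ltimes (tperm A B) (tperm B C) = ltimes (tperm B C) (tperm A B).
Proof.
move=> /negbTE ab /negbTE bc /negbTE ac.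
have ba := ab; rewrite eq_sym in ba. have cb := bc; rewrite eq_sym in cb. have ca := ac; rewrite eq_sym in ca.
rewrite (ltE' _ (negbT ab)) (ltE' _ (negbT bc)).
apply/permP => x. bf (@tpermK _ A B).
Qed.

Lemma tperm_comm n (x y z t : 'I_n) : x != z -> x != t -> y != z -> y != t ->
  tperm x y * tperm z t = tperm z t * tperm x y.
Proof.
move=> xz xt yz yt; rewrite conjgC tpermJ (tpermD (y:=t)) 1?eq_sym // (tpermD (x:=z) (y:=t) (z:=y)) 1?eq_sym //.
Qed.

Lemma lt_comm n (s t u : {perm 'I_n}) : s * t = t * s ->
  ltimes s (ltimes t u) = ltimes t (ltimes s u).
Proof.
move=> st.
have C1 : forall (s t v : {perm 'I_n}), s * t = t * s ->
   (s * (t * v) == t * v * s) = (s * v == v * s).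
  move=> s' t' v h; rewrite mulgA h -!mulgA; by apply/eqP/eqP => [/mulgI|->].
have C2 : forall (s t v : {perm 'I_n}), s * t = t * s ->
   (s * (t * v * t) == t * v * t * s) = (s * v == v * s).
  move=> s' t' v h. rewrite !mulgA h.
  have -> : t' * v * t' * s' = t' * v * s' * t' by rewrite -!mulgA -h.
  apply/eqP/eqP => [/mulIg|e]; first by rewrite -!mulgA => /mulgI.
  by rewrite -(mulgA t' s' v) e mulgA.
have ts := esym st.
rewrite /ltimes; case: (boolP (t * u == u * t)) => Ht; case: (boolP (s * u == u * s)) => Hs.
- by rewrite C1 // Hs C1 // Ht mulgA st mulgA.
- by rewrite C1 // (negbTE Hs) C2 // Ht !mulgA st.
- by rewrite C2 // Hs C1 // (negbTE Ht) !mulgA st.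
- by rewrite C2 // (negbTE Hs) C2 // (negbTE Ht) !mulgA st -!mulgA ts.
Qed.

Lemma inordE n x y : x <= n -> y <= n -> (@inord n x == @inord n y) = (x == y).
Proof.
move=> hx hy; apply/eqP/eqP => [h|->//].
by rewrite -(@inordK n x) -1?(@inordK n y) ?h.
Qed.

Lemma sgen2 n i : sgen n i * sgen n i = 1.
Proof. by case: n => [|n] /=; [rewrite mulg1 | rewrite tperm2]. Qed.

Lemma lt_inv n (s u : {perm 'I_n}) : s * s = 1 -> ltimes s (ltimes s u) = u.
Proof.
move=> ss; rewrite {2}/ltimes.
have e1 : s * (s * u) = u by rewrite mulgA ss mul1g.
case: (s * u =P u * s) => H; rewrite /ltimes.
- rewrite e1; case: eqP => // []; by rewrite H -mulgA ss mulg1.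
- have e2 : s * (s * u * s) = u * s by rewrite !mulgA ss mul1g.
  have e3 : s * u * s * s = s * u by rewrite -mulgA ss mulg1.
  rewrite e2 e3; case: eqP => [E|_]; first by exfalso; apply: H.
  by rewrite -mulgA ss mulg1.
Qed.

Lemma tact_rcons n r i (v : {perm 'I_n}) : tact (rcons r i) v = tact r (ltimes (sgen n i) v).
Proof. by rewrite /tact foldr_rcons. Qed.

Lemma tact_cat n p q (v : {perm 'I_n}) : tact (p ++ q) v = tact p (tact q v).
Proof. by rewrite /tact foldr_cat. Qed.

Lemma tact_rev n q (v : {perm 'I_n}) : tact (rev q) (tact q v) = v.
Proof.
elim: q v => [//|i q IH] v.
by rewrite rev_cons tact_rcons /= lt_inv ?sgen2 // IH.
Qed.

Lemma reach_tact n q k (v : {perm 'I_n}) : reachable_in k v -> all (validS n) q ->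
  reachable_in (k + size q) (tact q v).
Proof.
move=> Hr; elim: q => [|i q IH] /=; first by rewrite addn0.
case/andP=> vi vq; case: (IH vq) => l [sl [vl el]].
exists (i :: l); split; first by rewrite /= sl addnS.
by split; [rewrite /= vi vl | rewrite el].
Qed.

Lemma reachbE n (u : {perm 'I_n}) k : reachb u k = true <-> reachable_in k u.
Proof. by rewrite /reachb; case: excluded_middle_informative. Qed.

Lemma rho_spec n (u : {perm 'I_n}) : (exists k, reachable_in k u) ->
  reachable_in (rho u) u /\ (forall k, reachable_in k u -> rho u <= k).
Proof.
move=> [k0 h0]; rewrite /rho; case: excluded_middle_informative => [h|nh]; last first.
  by exfalso; apply: nh; exists k0; apply/reachbE.
case: ex_minnP => m Hm Hmin; split; first exact/reachbE.
by move=> k hk; apply: Hmin; apply/reachbE.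
Qed.

Lemma rho_unreach n (u : {perm 'I_n}) : ~ (exists k, reachable_in k u) -> rho u = 0.
Proof.
rewrite /rho; case: excluded_middle_informative => // [[k hk]] nh.
by exfalso; apply: nh; exists k; apply/reachbE.
Qed.

Lemma mono n (w : {perm 'I_n}) q q' : all (validS n) q -> all (validS n) q' ->
  rho (tact q w) = rho w + size q -> 0 < size q -> tact q w = tact q' w ->
  size q <= size q'.
Proof.
move=> vq vq' hr hs he.
have hX : exists k, reachable_in k (tact q w).
  case: (excluded_middle_informative (exists k, reachable_in k (tact q w))) => // nh.
  by move: hr; rewrite rho_unreach //; lia.
have hw : exists k, reachable_in k w.
  case: hX => k hk; exists (k + size (rev q)).
  have := reach_tact hk (_ : all (validS n) (rev q)); rewrite tact_rev; apply.
  by rewrite all_rev.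
case: (rho_spec hw) => hw1 _.
have := reach_tact hw1 vq'; rewrite -he => h2.
case: (rho_spec hX) => _ hmin; have := hmin _ h2.
by rewrite hr leq_add2l.
Qed.

Lemma sgen_valid n i : validS n.+1 i ->
  sgen n.+1 i = tperm (@inord n i.-1) (@inord n i) /\ (@inord n i.-1 != @inord n i).
Proof.
rewrite /validS => /andP[h0 h1]; split => //.
rewrite inordE; [apply/eqP; lia | lia | lia].
Qed.

Lemma rho_gen n i : validS n i -> rho (sgen n i) = 1%N.
Proof.
move=> vi.
have r1 : reachable_in 1%N (sgen n i).
  exists [:: i]; split => //; split; first by rewrite /= vi.
  by rewrite /tact /= /ltimes mulg1 mul1g eqxx.
have hx : exists k, reachable_in k (sgen n i) by exists 1%N.
case: (rho_spec hx) => h0 hmin; have := hmin _ r1.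
case E: (rho (sgen n i)) => [|[|m]] // _.
rewrite E in h0; case: h0 => l [sl [_ el]].
case: l sl el => // _ /= el.
clear r1 hx hmin E; case: n vi el => [|n] vi el; first by move: vi; rewrite /validS; lia.
case: (sgen_valid vi) => e ne; rewrite e in el.
move/permP: el => /(_ (inord i.-1)); rewrite tpermL perm1 => h.
by rewrite h eqxx in ne.
Qed.

Lemma invK n (w : {perm 'I_n}) : is_involution w -> forall y, w (w y) = y.
Proof. by move=> /eqP ww y; rewrite -permM ww perm1. Qed.

Lemma T3 n (w : {perm 'I_n}) b c : is_involution w -> validS n b -> validS n c ->
  (c = b.+1 \/ c.+1 = b) ->
  tact [:: c; b; c] w = tact [:: b; c; b] w \/ tact [:: c; b; c] w = tact [:: b] w.
Proof.
move=> /invK Hw vb vc hbc.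
case: n w Hw vb vc => [|n] w Hw vb vc; first by move: vb; rewrite /validS; lia.
rewrite /tact /=.
case: (sgen_valid vb) => eb nb; case: (sgen_valid vc) => ec nc; rewrite ?eb ?ec.
move: vb vc; rewrite /validS => /andP[b0 b1] /andP[c0 c1].
case: hbc => hbc; subst.
- have ne : (@inord n b.-1 != @inord n b.+1) by rewrite inordE; [apply/eqP; lia|lia|lia].
  rewrite /= in nc *.
  have := K (a:=inord b.+1) (b:=inord b) (c:=inord b.-1) _ _ _ Hw.
  rewrite /= [tperm (inord b.+1) _]tpermC [tperm (inord b) (inord b.-1)]tpermC.
  by apply; rewrite // eq_sym.
- have ne : (@inord n c.-1 != @inord n c.+1) by rewrite inordE; [apply/eqP; lia|lia|lia].
  rewrite /= in nb *.
  exact: (K nc nb ne Hw).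
Qed.

Lemma sgen_comm n a b : validS n a -> validS n b -> (a.+1 < b \/ b.+1 < a)%N ->
  sgen n a * sgen n b = sgen n b * sgen n a.
Proof.
case: n => [|n] va vb hab; first by move: va; rewrite /validS; lia.
case: (sgen_valid va) => -> _; case: (sgen_valid vb) => -> _.
move: va vb; rewrite /validS => /andP[a0 a1] /andP[b0 b1].
by apply: tperm_comm; rewrite inordE; try (apply/eqP); lia.
Qed.

Lemma sgen_braid n a j : validS n a -> validS n j -> (j = a.+1 \/ j.+1 = a) ->
  ltimes (sgen n a) (sgen n j) = ltimes (sgen n j) (sgen n a).
Proof.
case: n => [|n] va vj hj; first by move: va; rewrite /validS; lia.
case: (sgen_valid va) => -> na; case: (sgen_valid vj) => -> nj.
move: va vj; rewrite /validS => /andP[a0 a1] /andP[j0 j1].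
case: hj => hj; subst.
+ have ne : (@inord n a.-1 != @inord n a.+1) by rewrite inordE; [apply/eqP; lia|lia|lia].
  by rewrite /= in nj *; rewrite braid3.
+ have ne : (@inord n j.-1 != @inord n j.+1) by rewrite inordE; [apply/eqP; lia|lia|lia].
  by rewrite /= in na *; rewrite braid3.
Qed.

Theorem lemma2p13 (n : nat) (w : {perm 'I_n}) (l : seq nat) :
  is_involution w -> reduced l w ->
  [/\ (* (1) *)
      (forall (p : seq nat) (a b : nat),
         l = p ++ [:: a; b] -> (a.+1 < b \/ b.+1 < a)%N ->
         reduced (p ++ [:: b; a]) w /\ tact (p ++ [:: a; b]) w = tact (p ++ [:: b; a]) w),
      (* (2) *)
      (forall (p : seq nat) (a b c : nat),
         l = p ++ [:: a; b; c] -> a = c -> (c = b.+1 \/ c.+1 = b) ->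
         reduced (p ++ [:: b; c; b]) w /\ tact (p ++ [:: a; b; c]) w = tact (p ++ [:: b; c; b]) w)
    & (* (3) *)
      (forall (p : seq nat) (a j : nat),
         l = rcons p a -> (j = a.+1 \/ j.+1 = a) -> validS n j -> w = sgen n j ->
         reduced (rcons p j) (sgen n a) /\ tact (rcons p a) (sgen n j) = tact (rcons p j) (sgen n a))].
Proof.
move=> Iw [_ vl hr]; split.
- move=> p a b el hab; subst l.
  move: vl; rewrite all_cat /= => /and3P[vp va /andP[vb _]].
  have E : tact (p ++ [:: a; b]) w = tact (p ++ [:: b; a]) w.
    rewrite !tact_cat /tact /=; congr foldr.
    by apply: lt_comm; apply: sgen_comm.
  split => //; split => //.
    by rewrite all_cat vp /= va vb.
  by rewrite -E hr !size_cat.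
- move=> p a b c el ac hbc; subst l a.
  move: vl; rewrite all_cat /= => /and4P[vp vc vb /andP[_ _]].
  have E : tact [:: c; b; c] w = tact [:: b; c; b] w.
    case: (T3 Iw vb vc hbc) => // E.
    have : size (p ++ [:: c; b; c]) <= size (p ++ [:: b]).
      apply: (mono _ _ hr).
      - by rewrite all_cat vp /= vc vb.
      - by rewrite all_cat vp /= vb.
      - by rewrite size_cat addn3.
      - by rewrite !tact_cat E.
    by rewrite !size_cat /=; lia.
  have E' : tact (p ++ [:: c; b; c]) w = tact (p ++ [:: b; c; b]) w by rewrite !tact_cat E.
  split => //; split => //; first by rewrite all_cat vp /= vb vc.
  by rewrite -E' hr !size_cat.
- move=> p a j el hj vj ew; subst l w.
  move: vl; rewrite all_rcons => /andP[va vp].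
  have E : tact (rcons p a) (sgen n j) = tact (rcons p j) (sgen n a).
    rewrite !tact_rcons; congr tact.
    exact: sgen_braid.
  split => //; split.
  + by apply/eqP; rewrite sgen2.
  + by rewrite all_rcons vj vp.
  + by rewrite -E hr !rho_gen // !size_rcons.
Qed.
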